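(* Let ${\bm{x}}_1^m,\dots,{\bm{x}}_n^m\in\mathbb{R}^d$ satisfy $\|{\bm{x}}_i^m\|\le1$, let $\ell(z)=\log(1+e^{-z})$ and $F_m({\bm{w}})=\frac1n\sum_{i=1}^n\ell(\langle{\bm{w}},{\bm{x}}_i^m\rangle)$. For ${\bm{w}}_1,{\bm{w}}_2\in\mathbb{R}^d$ with $\|{\bm{w}}_1-{\bm{w}}_2\|\le1$, $$\|\nabla F_m({\bm{w}}_2)-\nabla F_m({\bm{w}}_1)\|\le7F_m({\bm{w}}_1)\|{\bm{w}}_2-{\bm{w}}_1\|.$$
   Context: $F_m$ is the logistic loss of client $m$ in a distributed logistic regression problem with labels absorbed into the data. *)

(* Defs.v *)
From HB Require Import structures.
From mathcomp Require Import all_boot all_order all_algebra.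
From mathcomp Require Import all_classical all_reals all_analysis.
Set Implicit Arguments. Unset Strict Implicit. Unset Printing Implicit Defensive.
Import Order.TTheory GRing.Theory Num.Theory.
Import numFieldNormedType.Exports.
Local Open Scope ring_scope.

(* Euclidean inner product and Euclidean norm on R^d
   (the library's default norm on matrices is the max-norm, so we define
   the Euclidean one explicitly). *)
Definition dotp (R : realType) (d : nat) (u v : 'rV[R]_d) : R :=
  \sum_(j < d) u 0 j * v 0 j.

Definition enorm (R : realType) (d : nat) (u : 'rV[R]_d) : R :=
  Num.sqrt (dotp u u).

Definition logloss (R : realType) (z : R) : R := ln (1 + expR (- z)).

Definition Fm (R : realType) (d n : nat) (x : 'I_n -> 'rV[R]_d) (w : 'rV[R]_d) : R :=
  n%:R^-1 * \sum_(i < n) logloss (dotp w (x i)).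

Definition grad (R : realType) (d : nat) (f : 'rV[R]_d -> R) (w : 'rV[R]_d) : 'rV[R]_d :=
  \row_(j < d) derive f w (delta_mx 0 j).

(* Main.v *)
Require Import Defs.
From HB Require Import structures.
From mathcomp Require Import all_boot all_order all_algebra.
From mathcomp Require Import all_classical all_reals all_analysis.
From mathcomp Require Import ring lra.
Import Order.TTheory GRing.Theory Num.Theory.
Import numFieldNormedType.Exports.
Local Open Scope ring_scope.
Section S.
Variable R : realType.

Definition dl (z : R) : R := - (expR (- z) / (1 + expR (- z))).

Lemma derive_1d (d : nat) (f : 'rV[R]_d -> R) a v :
  derive f a v = derive (fun h : R => f (h *: v + a)) 0 1.
Proof.
rewrite /derive; suff -> : (fun h : R => h^-1 *: ((f \o shift a) (h *: v) - f a)) = (fun h : R => h^-1 *: (((fun h : R => f (h *: v + a)) \o shift 0) (h *: 1) - f (0 *: v + a))) by [].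
apply: funext => h /=; rewrite scale0r add0r addr0 [h *: 1]mulr1 /=.
by [].
Qed.


Lemma is_derive_logloss (z : R) : is_derive z 1 (@logloss R) (dl z).
Proof.
have e1 : is_derive z 1 (expR \o -%R) (expR (- z) * (-1)).
  by apply: is_derive1_comp.
have e2 : is_derive z 1 (cst 1 + (expR \o -%R)) (0 + expR (- z) * (-1)).
  by apply: is_deriveD.
have hp : 0 < (cst 1 + (expR \o -%R)) z by rewrite /= addr_gt0 ?expR_gt0.
have e3 := is_derive1_comp (is_derive1_ln hp) e2.
have -> : @logloss R = (@ln R) \o (cst 1 + (expR \o -%R)) by [].
apply: is_derive_eq e3 _.
rewrite /dl /=.
rewrite /= add0r mulrN1 mulrN mulrC. done.
Qed.


Lemma dotpDZ (d : nat) (h : R) (v w y : 'rV[R]_d) :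
  dotp (h *: v + w) y = h * dotp v y + dotp w y.
Proof.
rewrite /dotp mulr_sumr -big_split /=; apply: eq_bigr => j _.
by rewrite !mxE mulrDl mulrA.
Qed.

Lemma is_derive_aff (s z : R) : is_derive (0:R) 1 (fun h : R => h * s + z) s.
Proof.
have -> : (fun h : R => h * s + z) = s \*: (@id R) + cst z.
  by apply: funext => h /=; rewrite mulrC.
apply: is_derive_eq.
by rewrite addr0; exact: mulr1.
Qed.

Lemma derive_Fm (d n : nat) (x : 'I_n -> 'rV[R]_d) (w v : 'rV[R]_d) :
  derive (Fm x) w v = n%:R^-1 * \sum_(i < n) dl (dotp w (x i)) * dotp v (x i).
Proof.
rewrite derive_1d.
have -> : (fun h : R => Fm x (h *: v + w)) =
   n%:R^-1 \*: \sum_(i < n) (@logloss R \o (fun h : R => h * dotp v (x i) + dotp w (x i))).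
  apply: funext => h; rewrite /Fm /= fct_sumE; congr (_ * _).
  by apply: eq_bigr => i _; rewrite dotpDZ.
apply: derive_val.
apply: is_deriveZ; apply: is_derive_sum => i.
apply: is_derive_eq.
  apply: is_derive1_comp.
  rewrite mul0r add0r; exact: is_derive_logloss.
by rewrite /= scaler0 add0r addr0 [_%:A]mulr1.
Qed.

Lemma dotpC (d : nat) (u v : 'rV[R]_d) : dotp u v = dotp v u.
Proof. by rewrite /dotp; apply: eq_bigr => j _; rewrite mulrC. Qed.

Lemma dotp_ge0 (d : nat) (u : 'rV[R]_d) : 0 <= dotp u u.
Proof. by rewrite /dotp; apply: sumr_ge0 => j _; rewrite -expr2 sqr_ge0. Qed.

Lemma enorm_sq (d : nat) (u : 'rV[R]_d) : enorm u ^+ 2 = dotp u u.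
Proof. by rewrite /enorm sqr_sqrtr // dotp_ge0. Qed.

Lemma enorm_ge0 (d : nat) (u : 'rV[R]_d) : 0 <= enorm u.
Proof. exact: sqrtr_ge0. Qed.

Lemma cs_sq (d : nat) (u v : 'rV[R]_d) : dotp u v ^+ 2 <= dotp u u * dotp v v.
Proof.
have key : 0 <= \sum_(j < d) \sum_(k < d) (u 0 j * v 0 k - u 0 k * v 0 j) ^+ 2.
  by apply: sumr_ge0 => j _; apply: sumr_ge0 => k _; apply: sqr_ge0.
have e : \sum_(j < d) \sum_(k < d) (u 0 j * v 0 k - u 0 k * v 0 j) ^+ 2 =
   (dotp u u * dotp v v) *+ 2 - (dotp u v ^+ 2) *+ 2.
  transitivity (\sum_(j < d) \sum_(k < d) ((u 0 j * u 0 j) * (v 0 k * v 0 k)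
      + (u 0 k * u 0 k) * (v 0 j * v 0 j) - ((u 0 j * v 0 j) * (u 0 k * v 0 k)) *+ 2)).
    by apply: eq_bigr => j _; apply: eq_bigr => k _; ring.
  under eq_bigr => j _ do rewrite sumrB big_split /=.
  rewrite sumrB big_split /=.
  have hX : \sum_(j < d) \sum_(k < d) ((u 0 j * u 0 j) * (v 0 k * v 0 k)) = dotp u u * dotp v v.
    by rewrite /dotp big_distrlr.
  have hY : \sum_(j < d) \sum_(k < d) ((u 0 k * u 0 k) * (v 0 j * v 0 j)) = dotp u u * dotp v v.
    by rewrite exchange_big /dotp big_distrlr.
  have hZ : \sum_(j < d) \sum_(k < d) (((u 0 j * v 0 j) * (u 0 k * v 0 k)) *+ 2) = dotp u v ^+ 2 *+ 2.
    rewrite /dotp expr2 big_distrlr -sumrMnl; apply: eq_bigr => j _.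
    by rewrite -sumrMnl.
  by rewrite hX hY hZ mulr2n.
move: key; rewrite e subr_ge0 => h.
by rewrite -(ler_pMn2r (n := 2)).
Qed.


Lemma cs (d : nat) (u v : 'rV[R]_d) : `|dotp u v| <= enorm u * enorm v.
Proof.
rewrite /enorm -sqrtrM ?dotp_ge0 // -sqrtr_sqr ler_sqrt ?cs_sq //.
by rewrite mulr_ge0 ?dotp_ge0.
Qed.

Lemma dotp_sumZ (d n : nat) (c : 'I_n -> R) (x : 'I_n -> 'rV[R]_d) (y : 'rV[R]_d) :
  dotp (\sum_(i < n) c i *: x i) y = \sum_(i < n) c i * dotp (x i) y.
Proof.
rewrite /dotp.
under eq_bigr => j _ do rewrite summxE big_distrl /=.
rewrite exchange_big; apply: eq_bigr => i _.
by rewrite mulr_sumr; apply: eq_bigr => j _; rewrite !mxE mulrA.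
Qed.

Lemma enorm_sumZ (d n : nat) (c : 'I_n -> R) (x : 'I_n -> 'rV[R]_d) :
  (forall i, enorm (x i) <= 1) ->
  enorm (\sum_(i < n) c i *: x i) <= \sum_(i < n) `|c i|.
Proof.
move=> hx; set y := \sum_(i < n) c i *: x i.
have h : enorm y * enorm y <= (\sum_(i < n) `|c i|) * enorm y.
  rewrite -expr2 enorm_sq {1}/y dotp_sumZ mulr_suml.
  apply: ler_sum => i _.
  apply: (le_trans (ler_norm _)); rewrite normrM.
  apply: ler_wpM2l => //.
  have H := @cs _ (x i) y; apply: (le_trans H); rewrite ler_piMl ?enorm_ge0 //.
have [y0|yp] := eqVneq (enorm y) 0.
  by rewrite y0 sumr_ge0.
have yp' : 0 < enorm y by rewrite lt_def yp enorm_ge0.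
by rewrite -(ler_pM2r yp').
Qed.

Lemma expR_le4 (u : R) : 0 <= u -> u <= 1 -> expR u <= 4.
Proof.
move=> u0 u1.
have h1 := expR_ge1Dx (- (u / 2)).
have h2 : expR (u / 2) * expR (- (u / 2)) = 1 by rewrite expRxMexpNx_1.
have h3 : expR u = expR (u / 2) * expR (u / 2) by rewrite -expRD -splitr.
have p1 := expR_gt0 (u / 2).
have h4 : expR (u / 2) <= 2 by nra.
by rewrite h3; nra.
Qed.

Lemma one_sub_expR (u : R) : `|u| <= 1 -> `|1 - expR u| <= 4 * `|u|.
Proof.
move=> hu.
have [u0|u0] := leP u 0.
  have h1 := expR_ge1Dx u.
  have h2 : expR u <= 1 by rewrite -[1]expR0 ler_expR.
  rewrite ger0_norm ?subr_ge0 // ler0_norm //.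
  lra.
have u1 : u <= 1 by move: hu; rewrite gtr0_norm.
have h1 := expR_ge1Dx (- u).
have h2 : expR u * expR (- u) = 1 by rewrite expRxMexpNx_1.
have h3 := @expR_le4 u (ltW u0) u1.
have h4 : 1 <= expR u by rewrite -[1]expR0 ler_expR ltW.
rewrite ler0_norm ?subr_le0 // gtr0_norm //.
have p := expR_gt0 u.
nra.
Qed.

Lemma logloss_ge (a : R) : expR (- a) / (1 + expR (- a)) <= logloss a.
Proof.
set E := expR (- a).
have E0 : 0 < E by apply: expR_gt0.
have h := @le_ln1Dx _ (- (E / (1 + E))).
have e : 1 + - (E / (1 + E)) = (1 + E)^-1.
  by field; rewrite gt_eqF // addr_gt0.
rewrite e lnV in h; last by rewrite posrE addr_gt0.
rewrite /logloss -/E.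
have : -1 < - (E / (1 + E)).
  rewrite ltrN2 ltr_pdivrMr ?addr_gt0 //; lra.
move=> /h; lra.
Qed.

Lemma dl_lip (a b t : R) : `|b - a| <= t -> t <= 1 ->
  `|dl b - dl a| <= 7 * logloss a * t.
Proof.
move=> hab ht.
set u := a - b.
set E := expR (- a); set q := expR u.
have E0 : 0 < E by apply: expR_gt0.
have q0 : 0 < q by apply: expR_gt0.
have eb : expR (- b) = E * q by rewrite /E /q -expRD /u; congr expR; ring.
have e : dl b - dl a = (E / (1 + E)) * ((1 - q) / (1 + E * q)).
  rewrite /dl eb -/E; field.
  by rewrite !gt_eqF ?addr_gt0 ?mulr_gt0.
have hu : `|u| <= t by rewrite /u distrC.
have h1 := @one_sub_expR u (le_trans hu ht).
have h2 : `|(1 - q) / (1 + E * q)| <= `|1 - q|.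
  rewrite normrM ler_piMr // normrV ?unitfE ?gt_eqF ?addr_gt0 ?mulr_gt0 //.
  rewrite gtr0_norm ?addr_gt0 ?mulr_gt0 // invf_le1 ?addr_gt0 ?mulr_gt0 //.
  by rewrite lerDl mulr_ge0 // ltW.
have h3 : 0 <= E / (1 + E) by rewrite divr_ge0 // ltW // addr_gt0.
have h4 := logloss_ge a.
rewrite e normrM (ger0_norm h3).
have h5 : `|(1 - q) / (1 + E * q)| <= 4 * t.
  apply: (le_trans h2); apply: (le_trans h1); lra.
have h6 : 0 <= `|(1 - q) / (1 + E * q)| by [].
have t0 : 0 <= t := le_trans (normr_ge0 _) hab.
rewrite -/E in h4.
nra.
Qed.

Lemma dotp_delta (d : nat) (j : 'I_d) (y : 'rV[R]_d) : dotp (delta_mx 0 j) y = y 0 j.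
Proof.
rewrite /dotp (bigD1 j) //= big1 ?addr0.
  by rewrite mxE !eqxx mul1r.
by move=> k kj; rewrite mxE eqxx /=; case: eqP => [e|]; [by move: kj; rewrite e eqxx|]; rewrite mul0r.
Qed.

Lemma dotpB (d : nat) (u v y : 'rV[R]_d) : dotp (u - v) y = dotp u y - dotp v y.
Proof. by rewrite /dotp -sumrB; apply: eq_bigr => j _; rewrite !mxE mulrBl. Qed.

Lemma enormN (d : nat) (u : 'rV[R]_d) : enorm (- u) = enorm u.
Proof. by rewrite /enorm /dotp; congr Num.sqrt; apply: eq_bigr => j _; rewrite !mxE mulrNN. Qed.

Lemma grad_Fm (d n : nat) (x : 'I_n -> 'rV[R]_d) (w : 'rV[R]_d) :
  grad (Fm x) w = \sum_(i < n) (n%:R^-1 * dl (dotp w (x i))) *: x i.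
Proof.
apply/rowP => j; rewrite !mxE derive_Fm summxE mulr_sumr; apply: eq_bigr => i _.
by rewrite dotp_delta !mxE mulrA.
Qed.
End S.

Theorem lemmaB4 (R : realType) (d n : nat) (x : 'I_n -> 'rV[R]_d)
  (hx : forall i, enorm (x i) <= 1) (w1 w2 : 'rV[R]_d)
  (hw : enorm (w1 - w2) <= 1) :
  enorm (grad (Fm x) w2 - grad (Fm x) w1) <= 7 * Fm x w1 * enorm (w2 - w1).
Proof.
rewrite !grad_Fm -sumrB.
under eq_bigr => i _ do rewrite -scalerBl -mulrBr.
have H := @enorm_sumZ R d n (fun i => n%:R^-1 * (dl R (dotp w2 (x i)) - dl R (dotp w1 (x i)))) x hx.
apply: (le_trans H).
set t := enorm (w2 - w1).
have ht : t <= 1 by rewrite /t -enormN opprB.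
rewrite /Fm (mulrC 7) -!mulrA mulr_suml mulr_sumr.
apply: ler_sum => i _.
have -> : logloss (dotp w1 (x i)) * (7 * t) = 7 * logloss (dotp w1 (x i)) * t by ring.
rewrite normrM ger0_norm ?invr_ge0 // ler_wpM2l ?invr_ge0 //.
apply: dl_lip => //.
rewrite -dotpB; have H2 := @cs R d (w2 - w1) (x i); apply: (le_trans H2); rewrite ler_piMr ?enorm_ge0 //.
Qed.
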